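(* Let $(X,\|\cdot\|)$ be a normed linear space, let $I$ be a non-trivial admissible ideal in $\mathbb{N}$ and let $r>0$. A sequence $x=\{x_k\}_{k\in\mathbb{N}}$ in $X$ is rough $I$-statistically convergent with roughness degree $r$ to $\xi\in X$ if and only if there exists a sequence $y=\{y_k\}_{k\in\mathbb{N}}$ in $X$ which is $I$-statistically convergent to $\xi$ and satisfies $\|x_k-y_k\|\le r$ for all $k\in\mathbb{N}$.
   Context: An ideal $I$ in $\mathbb{N}$ is a family of subsets of $\mathbb{N}$ containing $\emptyset$, closed under finite unions and under taking subsets; it is non-trivial if $\mathbb{N}\notin I$ and admissible if $\{n\}\in I$ for every $n$. A sequence $y$ in $X$ is $I$-statistically convergent to $\xi$ if for every $\varepsilon>0$ and $\delta>0$, $\{n\in\mathbb{N}:\frac1n|\{k\le n:\|y_k-\xi\|\ge\varepsilon\}|\ge\delta\}\in I$. A sequence $x$ is rough $I$-statistically convergent with roughness degree $r\ge0$ to $\xi$ if for every $\varepsilon>0$ and $\delta>0$, $\{n\in\mathbb{N}:\frac1n|\{k\le n:\|x_k-\xi\|\ge r+\varepsilon\}|\ge\delta\}\in I$. *)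

(* Defs.v *)
From HB Require Import structures.
From mathcomp Require Import all_boot all_order all_algebra.
From mathcomp Require Import all_classical all_reals.
From mathcomp Require Import topology normedtype.
Set Implicit Arguments. Unset Strict Implicit. Unset Printing Implicit Defensive.
Import Order.TTheory GRing.Theory Num.Theory.
Import numFieldNormedType.Exports.
Local Open Scope classical_set_scope.
Local Open Scope ring_scope.

Definition is_ideal (I : set (set nat)) : Prop :=
  [/\ I set0,
      (forall A B, I A -> I B -> I (A `|` B)) &
      (forall A B, A `<=` B -> I B -> I A)].

Definition nontrivial_ideal (I : set (set nat)) : Prop := ~ I setT.

Definition admissible_ideal (I : set (set nat)) : Prop := forall n : nat, I [set n].

(* The paper's N = {1,2,...}; the sequence index k = 1..n is represented by the
   Rocq index k-1 in 'I_n = {0,..,n-1}, and n ranges over positive naturals. *)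
Definition stat_set (R : realType) (X : normedModType R)
    (u : nat -> X) (xi : X) (t delta : R) : set nat :=
  [set n : nat | (0 < n)%N /\
     delta <= (#|[set k : 'I_n | t <= `|u (nat_of_ord k) - xi|]|%:R / n%:R)].

Definition I_stat_cvg (R : realType) (X : normedModType R)
    (I : set (set nat)) (y : nat -> X) (xi : X) : Prop :=
  forall eps delta : R, 0 < eps -> 0 < delta -> I (stat_set y xi eps delta).

Definition rough_I_stat_cvg (R : realType) (X : normedModType R)
    (I : set (set nat)) (r : R) (x : nat -> X) (xi : X) : Prop :=
  forall eps delta : R, 0 < eps -> 0 < delta -> I (stat_set x xi (r + eps) delta).

(* Main.v *)
Require Import Defs.
From HB Require Import structures.
From mathcomp Require Import all_boot all_order all_algebra.
From mathcomp Require Import all_classical all_reals.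
From mathcomp Require Import topology normedtype.
Import Order.TTheory GRing.Theory Num.Theory.
Import numFieldNormedType.Exports.
Local Open Scope classical_set_scope.
Local Open Scope ring_scope.

Lemma stat_set_mono (R : realType) (X : normedModType R) (u v : nat -> X) (xi : X)
  (t t' delta : R) :
  (forall k, t' <= `|v k - xi| -> t <= `|u k - xi|) ->
  stat_set v xi t' delta `<=` stat_set u xi t delta.
Proof.
move=> H n [n0 hd]; split => //.
apply: (le_trans hd).
apply: ler_wpM2r; first by rewrite invr_ge0 ler0n.
rewrite ler_nat; apply: subset_leq_card; apply/fintype.subsetP => k.
rewrite /in_mem /= !in_setE; apply: H.
Qed.

Theorem theorem3p5 (R : realType) (X : normedModType R) (I : set (set nat))
    (r : R) (x : nat -> X) (xi : X) :
  is_ideal I -> nontrivial_ideal I -> admissible_ideal I -> 0 < r ->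
  (rough_I_stat_cvg I r x xi <->
   exists y : nat -> X, I_stat_cvg I y xi /\ (forall k : nat, `|x k - y k| <= r)).
Proof.
move=> [_ _ Isub] _ _ r0; split.
- move=> hx.
  pose s k : R := if `|x k - xi| <= r then 1 else r / `|x k - xi|.
  exists (fun k => x k - s k *: (x k - xi)); split.
  + move=> eps delta e0 d0.
    apply: Isub (hx eps delta e0 d0).
    apply: stat_set_mono => k.
    have -> : x k - s k *: (x k - xi) - xi = (1 - s k) *: (x k - xi).
      by rewrite scalerBl scale1r addrAC.
    rewrite /s; case: ifPn => hd.
      by rewrite subrr scale0r normr0 => /(lt_le_trans e0); rewrite ltxx.
    rewrite -ltNge in hd.
    have dpos : 0 < `|x k - xi| by apply: lt_trans hd.
    rewrite normrZ ger0_norm; last by rewrite subr_ge0 ler_pdivrMr // mul1r ltW.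
    rewrite mulrBl mul1r mulfVK ?gt_eqF // => h.
    by rewrite -lerBrDl.
  + move=> k.
    rewrite opprB addrCA subrr addr0 normrZ /s; case: ifPn => hd.
      by rewrite normr1 mul1r.
    rewrite -ltNge in hd.
    have dpos : 0 < `|x k - xi| by apply: lt_trans hd.
    rewrite (ger0_norm (divr_ge0 (ltW r0) (ltW dpos))) mulfVK ?gt_eqF //.
- move=> [y [hy hxy]] eps delta e0 d0.
  apply: Isub (hy eps delta e0 d0).
  apply: stat_set_mono => k h.
  have h1 : `|x k - xi| <= `|x k - y k| + `|y k - xi|.
    by have := ler_normD (x k - y k) (y k - xi); rewrite addrA subrK.
  have h4 : r + eps <= r + `|y k - xi|.
    by apply: (le_trans h); apply: (le_trans h1); rewrite lerD2r; exact: hxy.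
  by rewrite lerD2l in h4.
Qed.
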